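(* Let $m,n\in\mathbb{N}$ and let $p_{j,\ell},q_{j,\ell}\in\mathbb{C}$ with $\Re(p_{j,\ell})>0$, $\Re(q_{j,\ell})>0$ for $1\le j\le n$, $1\le\ell\le m$. Then the $n\times n$ matrix \[ \left(\prod_{\ell=1}^{m}B\left(p_{j,\ell}+\overline{p_{k,\ell}},\ q_{j,\ell}+\overline{q_{k,\ell}}\right)\right)_{j,k=1}^{n} \] is positive semidefinite.
   Context: $B(p,q)=\int_{0}^{1}x^{p-1}(1-x)^{q-1}dx$ for $\Re(p),\Re(q)>0$ is Euler's Beta function. A complex matrix $A=(a_{j,k})$ is positive semidefinite if $\sum_{j,k}a_{j,k}z_j\overline{z_k}\ge0$ for all complex $z_j$. *)

(* Defs.v *)
From Stdlib Require Import Reals.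
From Coquelicot Require Import Coquelicot.
Open Scope R_scope.

(* complex power x^z := exp(z ln x) for real x > 0 (principal branch) *)
Definition cpow (x : R) (z : C) : C :=
  Cmult (RtoC (exp (Re z * ln x)))
        (cos (Im z * ln x), sin (Im z * ln x)).

Definition Beta (p q : C) : C :=
  RInt_gen (V := C_R_CompleteNormedModule)
    (fun x => Cmult (cpow x (Cminus p 1)) (cpow (1 - x) (Cminus q 1)))
    (at_right 0) (at_left 1).

Fixpoint sumC (f : nat -> C) (n : nat) : C :=
  match n with O => RtoC 0 | S k => Cplus (sumC f k) (f k) end.
Fixpoint prodC (f : nat -> C) (n : nat) : C :=
  match n with O => RtoC 1 | S k => Cmult (prodC f k) (f k) end.

(* An n x n complex matrix A (entries A j k, 0 <= j,k < n) is positive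
   semidefinite if sum_{j,k} A j k z_j conj(z_k) >= 0 (a nonnegative real)
   for all complex z_j. *)
Definition psd (n : nat) (A : nat -> nat -> C) : Prop :=
  forall z : nat -> C,
    let s := sumC (fun j => sumC (fun k => Cmult (Cmult (A j k) (z j)) (Cconj (z k))) n) n in
    Im s = 0 /\ 0 <= Re s.

(* Main.v *)
Require Import Defs.
From Stdlib Require Import Reals Lra Lia.
From Coquelicot Require Import Coquelicot.
Open Scope R_scope.

Lemma cpow_eq x z : cpow x z =
  (exp (Re z * ln x) * cos (Im z * ln x), exp (Re z * ln x) * sin (Im z * ln x)).
Proof. unfold cpow. apply injective_projections; simpl; ring. Qed.

Lemma cpow_plus x a b : cpow x (Cplus a b) = Cmult (cpow x a) (cpow x b).
Proof.
  rewrite !cpow_eq. apply injective_projections; simpl; unfold Re, Im;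
  replace ((fst a + fst b) * ln x) with (fst a * ln x + fst b * ln x) by ring;
  replace ((snd a + snd b) * ln x) with (snd a * ln x + snd b * ln x) by ring;
  rewrite exp_plus; try rewrite cos_plus; try rewrite sin_plus; ring.
Qed.

Lemma cpow_conj x a : Cconj (cpow x a) = cpow x (Cconj a).
Proof.
  rewrite !cpow_eq. apply injective_projections; simpl; unfold Re, Im; simpl.
  - replace (- snd a * ln x) with (-(snd a * ln x)) by ring. rewrite cos_neg. ring.
  - replace (- snd a * ln x) with (-(snd a * ln x)) by ring. rewrite sin_neg. ring.
Qed.

Lemma Cmod_cpow x a : Cmod (cpow x a) = exp (Re a * ln x).
Proof.
  rewrite cpow_eq. unfold Cmod. simpl.
  match goal with |- sqrt ?e = _ => replace e with (exp (Re a * ln x) ^ 2 * (Rsqr (sin (Im a * ln x)) + Rsqr (cos (Im a * ln x)))) by (unfold Rsqr; ring) end.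
  rewrite sin2_cos2, Rmult_1_r. rewrite sqrt_pow2; auto. left; apply exp_pos.
Qed.

Definition Fi (A B : C) (x : R) : C := Cmult (cpow x A) (cpow (1 - x) B).

Lemma Fi_fst A B x : fst (Fi A B x) =
  exp (Re A * ln x) * cos (Im A * ln x) * (exp (Re B * ln (1-x)) * cos (Im B * ln (1-x)))
  - exp (Re A * ln x) * sin (Im A * ln x) * (exp (Re B * ln (1-x)) * sin (Im B * ln (1-x))).
Proof. unfold Fi. rewrite !cpow_eq. simpl. ring. Qed.
Lemma Fi_snd A B x : snd (Fi A B x) =
  exp (Re A * ln x) * cos (Im A * ln x) * (exp (Re B * ln (1-x)) * sin (Im B * ln (1-x)))
  + exp (Re A * ln x) * sin (Im A * ln x) * (exp (Re B * ln (1-x)) * cos (Im B * ln (1-x))).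
Proof. unfold Fi. rewrite !cpow_eq. simpl. ring. Qed.

Lemma Fi_ex_RInt A B u v : 0 < u < 1 -> 0 < v < 1 -> ex_RInt (Fi A B) u v.
Proof.
  intros Hu Hv.
  assert (H1 : ex_RInt (fun t => fst (Fi A B t)) u v).
  { apply (ex_RInt_continuous (V := R_CompleteNormedModule)). intros z Hz.
    assert (0 < z < 1).
    { split. apply Rlt_le_trans with (Rmin u v); [apply Rmin_glb_lt; lra | lra].
      apply Rle_lt_trans with (Rmax u v); [lra | apply Rmax_lub_lt; lra]. }
    apply continuous_ext with (f := fun x =>
  exp (Re A * ln x) * cos (Im A * ln x) * (exp (Re B * ln (1-x)) * cos (Im B * ln (1-x)))
  - exp (Re A * ln x) * sin (Im A * ln x) * (exp (Re B * ln (1-x)) * sin (Im B * ln (1-x)))).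
    intros; rewrite Fi_fst; reflexivity.
    apply (ex_derive_continuous (K := R_AbsRing) (V := R_NormedModule)). auto_derive. lra. }
  assert (H2 : ex_RInt (fun t => snd (Fi A B t)) u v).
  { apply (ex_RInt_continuous (V := R_CompleteNormedModule)). intros z Hz.
    assert (0 < z < 1).
    { split. apply Rlt_le_trans with (Rmin u v); [apply Rmin_glb_lt; lra | lra].
      apply Rle_lt_trans with (Rmax u v); [lra | apply Rmax_lub_lt; lra]. }
    apply continuous_ext with (f := fun x =>
  exp (Re A * ln x) * cos (Im A * ln x) * (exp (Re B * ln (1-x)) * sin (Im B * ln (1-x)))
  + exp (Re A * ln x) * sin (Im A * ln x) * (exp (Re B * ln (1-x)) * cos (Im B * ln (1-x)))).
    intros; rewrite Fi_snd; reflexivity.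
    apply (ex_derive_continuous (K := R_AbsRing) (V := R_NormedModule)). auto_derive. lra. }
  destruct H1 as [l1 H1]. destruct H2 as [l2 H2].
  exists (l1, l2).
  apply (is_RInt_fct_extend_pair (U := R_NormedModule) (V := R_NormedModule) (Fi A B)); assumption.
Qed.

Lemma normC x : @norm R_AbsRing C_R_NormedModule x = Cmod x.
Proof. unfold norm. simpl. unfold prod_norm, Cmod. simpl. unfold norm; simpl. unfold abs; simpl. rewrite !Rmult_1_r, <- !Rabs_mult, !Rabs_right by (apply Rle_ge, Rle_0_sqr). reflexivity. Qed.

Lemma norm_Fi A B x : Cmod (Fi A B x) = exp (Re A * ln x) * exp (Re B * ln (1-x)).
Proof.
  unfold Fi. rewrite Cmod_mult, !Cmod_cpow. reflexivity.
Qed.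



Lemma exp_half_bound c y : /2 <= y -> y <= 1 -> exp (c * ln y) <= exp (Rabs c * ln 2).
Proof.
  intros H1 H2.
  assert (Hl1 : ln y <= 0). { rewrite <- ln_1. apply ln_le; lra. }
  assert (Hl2 : - ln 2 <= ln y). { rewrite <- ln_Rinv by lra. apply ln_le; lra. }
  assert (Hl3 : 0 < ln 2). { rewrite <- ln_1. apply ln_increasing; lra. }
  destruct (Rle_lt_dec (c * ln y) (Rabs c * ln 2)) as [Hc|Hc].
  - destruct Hc as [Hc|Hc]. left; apply exp_increasing; exact Hc. rewrite Hc; lra.
  - exfalso. destruct (Rcase_abs c) as [Hn|Hp].
    + rewrite Rabs_left in Hc by exact Hn. nra.
    + rewrite Rabs_right in Hc by exact Hp. nra.
Qed.

Lemma RInt_norm_bound (f : R -> C) (g G : R -> R) u v :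
  ex_RInt f u v ->
  (forall x, Rmin u v <= x <= Rmax u v -> Cmod (f x) <= g x) ->
  (forall x, Rmin u v <= x <= Rmax u v -> is_derive G x (g x)) ->
  (forall x, Rmin u v <= x <= Rmax u v -> continuous g x) ->
  Cmod (RInt (V := C_R_CompleteNormedModule) f u v) <= Rabs (G v - G u).
Proof.
  intros Hf Hb Hd Hc.
  assert (Hg : is_RInt g u v (G v - G u)).
  { apply (is_RInt_derive (V := R_CompleteNormedModule) G g); assumption. }
  destruct (Rle_lt_dec u v) as [Huv|Huv].
  - rewrite Rmin_left, Rmax_right in Hb by lra.
    apply Rle_trans with (G v - G u); [|apply Rle_abs].
    rewrite <- normC.
    apply (norm_RInt_le f g u v). lra. intros x Hx; rewrite normC; auto.
    apply (RInt_correct (V := C_R_CompleteNormedModule)); assumption. exact Hg.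
  - rewrite Rmin_right, Rmax_left in Hb by lra.
    rewrite <- opp_RInt_swap by (apply ex_RInt_swap; assumption).
    rewrite <- normC.
    match goal with |- norm ?e <= _ => 
      replace (@norm R_AbsRing C_R_NormedModule e) with (@norm R_AbsRing C_R_NormedModule (RInt (V := C_R_CompleteNormedModule) f v u)) by (symmetry; exact (@norm_opp R_AbsRing C_R_NormedModule (RInt (V:=C_R_CompleteNormedModule) f v u))) end.
    rewrite Rabs_minus_sym.
    apply Rle_trans with (G u - G v); [|apply Rle_abs].
    apply (norm_RInt_le f g v u). lra. intros x Hx; rewrite normC; auto.
    apply (RInt_correct (V := C_R_CompleteNormedModule)); apply ex_RInt_swap; assumption.
    apply is_RInt_swap in Hg. 
    replace (G u - G v) with (opp (G v - G u)). exact Hg.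
    change (- (G v - G u) = G u - G v). ring.
Qed.

Lemma Re_m1 a : Re (Cminus a 1) = Re a - 1.
Proof. unfold Cminus, Re; simpl. ring. Qed.

Lemma exp_mono x y : x <= y -> exp x <= exp y.
Proof. intros [H|H]. left; apply exp_increasing; auto. rewrite H; lra. Qed.

Lemma Rabs_between x y M : 0 <= x <= M -> 0 <= y <= M -> Rabs (y - x) <= M.
Proof. intros; unfold Rabs; destruct (Rcase_abs (y - x)); lra. Qed.

Lemma near0_bound a b δ u v : 0 < Re a -> 0 < δ <= /2 -> 0 < u <= δ -> 0 < v <= δ ->
  Cmod (RInt (V := C_R_CompleteNormedModule) (Fi (Cminus a 1) (Cminus b 1)) u v)
   <= exp (Rabs (Re b - 1) * ln 2) / Re a * exp (Re a * ln δ).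
Proof.
  intros Ha Hd Hu Hv.
  set (K := exp (Rabs (Re b - 1) * ln 2)).
  assert (HK : 0 < K) by apply exp_pos.
  assert (Hmn : 0 < Rmin u v) by (apply Rmin_glb_lt; lra).
  assert (Hmx : Rmax u v <= δ) by (apply Rmax_lub; lra).
  eapply Rle_trans.
  apply (RInt_norm_bound _ (fun x => K * exp ((Re a - 1) * ln x))
                           (fun x => K / Re a * exp (Re a * ln x))).
  - apply Fi_ex_RInt; lra.
  - intros x Hx. rewrite norm_Fi, !Re_m1.
    rewrite Rmult_comm. apply Rmult_le_compat_r. left; apply exp_pos.
    apply exp_half_bound; lra.
  - intros x Hx. auto_derive. lra.
    replace ((Re a - 1) * ln x) with (Re a * ln x + - ln x) by ring.
    rewrite exp_plus, exp_Ropp, exp_ln by lra. field. lra.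
  - intros x Hx. apply (ex_derive_continuous (K := R_AbsRing) (V := R_NormedModule)).
    auto_derive. lra.
  - apply Rabs_between; split.
    + apply Rmult_le_pos. apply Rle_mult_inv_pos; lra. left; apply exp_pos.
    + apply Rmult_le_compat_l. apply Rle_mult_inv_pos; lra.
      apply exp_mono. apply Rmult_le_compat_l. lra. apply ln_le; lra.
    + apply Rmult_le_pos. apply Rle_mult_inv_pos; lra. left; apply exp_pos.
    + apply Rmult_le_compat_l. apply Rle_mult_inv_pos; lra.
      apply exp_mono. apply Rmult_le_compat_l. lra. apply ln_le; lra.
Qed.

Lemma near1_bound a b δ u v : 0 < Re b -> 0 < δ <= /2 -> 1 - δ <= u < 1 -> 1 - δ <= v < 1 ->
  Cmod (RInt (V := C_R_CompleteNormedModule) (Fi (Cminus a 1) (Cminus b 1)) u v)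
   <= exp (Rabs (Re a - 1) * ln 2) / Re b * exp (Re b * ln δ).
Proof.
  intros Hb Hd Hu Hv.
  set (K := exp (Rabs (Re a - 1) * ln 2)).
  assert (HK : 0 < K) by apply exp_pos.
  assert (Hmn : 1 - δ <= Rmin u v) by (apply Rmin_glb; lra).
  assert (Hmx : Rmax u v < 1) by (apply Rmax_lub_lt; lra).
  eapply Rle_trans.
  apply (RInt_norm_bound _ (fun x => K * exp ((Re b - 1) * ln (1 - x)))
                           (fun x => - (K / Re b) * exp (Re b * ln (1 - x)))).
  - apply Fi_ex_RInt; lra.
  - intros x Hx. rewrite norm_Fi, !Re_m1.
    apply Rmult_le_compat_r. left; apply exp_pos.
    apply exp_half_bound; lra.
  - intros x Hx. auto_derive. lra.
    replace ((Re b - 1) * ln (1 - x)) with (Re b * ln (1 - x) + - ln (1 - x)) by ring.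
    replace (1 + - x) with (1 - x) by ring.
    rewrite exp_plus, exp_Ropp, exp_ln by lra. field. lra.
  - intros x Hx. apply (ex_derive_continuous (K := R_AbsRing) (V := R_NormedModule)).
    auto_derive. lra.
  - set (M := K / Re b * exp (Re b * ln δ)).
    assert (HM : forall y, 1 - δ <= y < 1 -> 0 <= K / Re b * exp (Re b * ln (1 - y)) <= M).
    { intros y Hy. split.
      + apply Rmult_le_pos. apply Rle_mult_inv_pos; lra. left; apply exp_pos.
      + apply Rmult_le_compat_l. apply Rle_mult_inv_pos; lra.
        apply exp_mono. apply Rmult_le_compat_l. lra. apply ln_le; lra. }
    replace (- (K / Re b) * exp (Re b * ln (1 - v)) - - (K / Re b) * exp (Re b * ln (1 - u)))
      with (K / Re b * exp (Re b * ln (1 - u)) - K / Re b * exp (Re b * ln (1 - v))) by ring.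
    apply Rabs_between; apply HM; lra.
Qed.

Notation RIC f a b := (RInt (V := C_R_CompleteNormedModule) f a b).

Lemma ev_right d : 0 < d -> at_right 0 (fun a => 0 < a < d).
Proof.
  intros Hd. exists (mkposreal d Hd). intros y Hy Hy0. simpl in *.
  unfold ball in Hy; simpl in Hy; unfold AbsRing_ball, abs, minus, plus, opp in Hy; simpl in Hy.
  rewrite Rminus_0_r in Hy || idtac.
  apply Rabs_def2 in Hy. lra.
Qed.

Lemma ev_left d : 0 < d -> at_left 1 (fun b => 1 - d < b < 1).
Proof.
  intros Hd. exists (mkposreal d Hd). intros y Hy Hy0. simpl in *.
  unfold ball in Hy; simpl in Hy; unfold AbsRing_ball, abs, minus, plus, opp in Hy; simpl in Hy.
  apply Rabs_def2 in Hy. lra.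
Qed.

Lemma delta_choice (eps al K : R) : 0 < eps -> 0 < al -> 0 < K ->
  let d := exp (ln (eps * al / (4 * K)) / al) in
  0 < d /\ forall δ, 0 < δ <= d -> K / al * exp (al * ln δ) <= eps / 4.
Proof.
  intros He Ha HK d. split. apply exp_pos.
  intros δ Hδ.
  apply Rle_trans with (K / al * exp (al * ln d)).
  apply Rmult_le_compat_l. apply Rle_mult_inv_pos; lra.
  apply exp_mono. apply Rmult_le_compat_l. lra. apply ln_le; lra.
  unfold d. rewrite ln_exp.
  replace (al * (ln (eps * al / (4 * K)) / al)) with (ln (eps * al / (4 * K))) by (field; lra).
  rewrite exp_ln. right; field; lra.
  apply Rmult_lt_0_compat. nra. apply Rinv_0_lt_compat; lra.
Qed.

Lemma Fi_exists a b : 0 < Re a -> 0 < Re b ->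
  exists l, is_RInt_gen (V := C_R_NormedModule) (Fi (Cminus a 1) (Cminus b 1)) (at_right 0) (at_left 1) l.
Proof.
  intros Ha Hb.
  set (F := Fi (Cminus a 1) (Cminus b 1)).
  unfold is_RInt_gen.
  apply (filterlimi_locally_cauchy (U := C_R_CompleteNormedModule)
           (F := filter_prod (at_right 0) (at_left 1))
           (fun ab => is_RInt (V := C_R_NormedModule) F (fst ab) (snd ab))).
  - apply Filter_prod with (fun x => 0 < x < /2) (fun y => 1 - /2 < y < 1).
    apply ev_right; lra. apply ev_left; lra.
    intros x y Hx Hy; simpl. split.
    + exists (RIC F x y). apply (RInt_correct (V := C_R_CompleteNormedModule)).
      apply Fi_ex_RInt; lra.
    + intros y1 y2 H1 H2.
      rewrite <- (is_RInt_unique (V := C_R_CompleteNormedModule) F x y y1 H1).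
      rewrite <- (is_RInt_unique (V := C_R_CompleteNormedModule) F x y y2 H2). reflexivity.
  - intros eps.
    set (K0 := exp (Rabs (Re b - 1) * ln 2)).
    set (K1 := exp (Rabs (Re a - 1) * ln 2)).
    destruct (delta_choice eps (Re a) K0 (cond_pos eps) Ha (exp_pos _)) as [Hd0 H0].
    destruct (delta_choice eps (Re b) K1 (cond_pos eps) Hb (exp_pos _)) as [Hd1 H1].
    set (d0 := exp (ln (eps * Re a / (4 * K0)) / Re a)) in *.
    set (d1 := exp (ln (eps * Re b / (4 * K1)) / Re b)) in *.
    set (δ := Rmin (/2) (Rmin d0 d1)).
    assert (Hδ : 0 < δ <= /2).
    { split. apply Rmin_glb_lt. lra. apply Rmin_glb_lt; lra. apply Rmin_l. }
    assert (Hδ0 : δ <= d0). { unfold δ. eapply Rle_trans. apply Rmin_r. apply Rmin_l. }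
    assert (Hδ1 : δ <= d1). { unfold δ. eapply Rle_trans. apply Rmin_r. apply Rmin_r. }
    exists (fun ab => 0 < fst ab < δ /\ 1 - δ < snd ab < 1). split.
    + apply Filter_prod with (fun x => 0 < x < δ) (fun y => 1 - δ < y < 1).
      apply ev_right; lra. apply ev_left; lra.
      intros x y Hx Hy; simpl; tauto.
    + intros [u1 u2] [v1 v2] [Hu1 Hu2] [Hv1 Hv2] u' v' Hu' Hv'. simpl in *.
      apply (is_RInt_unique (V := C_R_CompleteNormedModule)) in Hu'.
      apply (is_RInt_unique (V := C_R_CompleteNormedModule)) in Hv'.
      subst u' v'.
      refine (norm_compat1 (K := R_AbsRing) (V := C_R_NormedModule) _ _ _ _). rewrite normC.
      assert (E1 : Cplus (RIC F v1 u1) (RIC F u1 v2) = RIC F v1 v2).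
      { apply (RInt_Chasles (V := C_R_CompleteNormedModule)); apply Fi_ex_RInt; lra. }
      assert (E2 : Cplus (RIC F u1 u2) (RIC F u2 v2) = RIC F u1 v2).
      { apply (RInt_Chasles (V := C_R_CompleteNormedModule)); apply Fi_ex_RInt; lra. }
      change (Cmod (Cminus (RIC F v1 v2) (RIC F u1 u2)) < eps).
      rewrite <- E1, <- E2.
      replace (Cminus (Cplus (RIC F v1 u1) (Cplus (RIC F u1 u2) (RIC F u2 v2))) (RIC F u1 u2))
        with (Cplus (RIC F v1 u1) (RIC F u2 v2)) by ring.
      eapply Rle_lt_trans. apply Cmod_triangle.
      assert (B0 : Cmod (RIC F v1 u1) <= eps / 4).
      { apply Rle_trans with (K0 / Re a * exp (Re a * ln δ)).
        apply (near0_bound a b δ v1 u1); lra. apply H0; lra. }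
      assert (B1 : Cmod (RIC F u2 v2) <= eps / 4).
      { apply Rle_trans with (K1 / Re b * exp (Re b * ln δ)).
        apply (near1_bound a b δ u2 v2); lra. apply H1; lra. }
      generalize (cond_pos eps); lra.
Qed.

Lemma RInt_Cmult (c : C) (f : R -> C) a b l :
  is_RInt (V := C_R_NormedModule) f a b l ->
  is_RInt (V := C_R_NormedModule) (fun x => Cmult c (f x)) a b (Cmult c l).
Proof.
  intros H.
  assert (H1 := is_RInt_fct_extend_fst (U := R_NormedModule) (V := R_NormedModule) f a b l H).
  assert (H2 := is_RInt_fct_extend_snd (U := R_NormedModule) (V := R_NormedModule) f a b l H).
  apply (is_RInt_fct_extend_pair (U := R_NormedModule) (V := R_NormedModule)).
  - simpl.
    apply (is_RInt_minus (V := R_NormedModule) (fun t => fst c * fst (f t)) (fun t => snd c * snd (f t))).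
    apply (is_RInt_scal (V := R_NormedModule) (fun t => fst (f t))); exact H1.
    apply (is_RInt_scal (V := R_NormedModule) (fun t => snd (f t))); exact H2.
  - simpl.
    apply (is_RInt_plus (V := R_NormedModule) (fun t => fst c * snd (f t)) (fun t => snd c * fst (f t))).
    apply (is_RInt_scal (V := R_NormedModule) (fun t => snd (f t))); exact H2.
    apply (is_RInt_scal (V := R_NormedModule) (fun t => fst (f t))); exact H1.
Qed.

Definition Fp := filter_prod (at_right 0) (at_left 1).

Lemma gen_Cmult (c : C) (f : R -> C) l :
  is_RInt_gen (V := C_R_NormedModule) f (at_right 0) (at_left 1) l ->
  is_RInt_gen (V := C_R_NormedModule) (fun x => Cmult c (f x)) (at_right 0) (at_left 1) (Cmult c l).
Proof.
  unfold is_RInt_gen. intros H.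
  apply (filterlimi_locally (U := C_R_NormedModule)). intros eps.
  assert (H' := proj1 (filterlimi_locally (U := C_R_NormedModule) (F := filter_prod (at_right 0) (at_left 1)) (fun ab => is_RInt (V := C_R_NormedModule) f (fst ab) (snd ab)) l) H).
  clear H; rename H' into H.
  assert (Hnf : 0 < @norm_factor R_AbsRing C_R_NormedModule) by apply norm_factor_gt_0.
  assert (Hc : 0 <= Cmod c) by apply Cmod_ge_0.
  assert (He : 0 < eps / ((1 + Cmod c) * @norm_factor R_AbsRing C_R_NormedModule)).
  { apply Rdiv_lt_0_compat. apply (cond_pos eps). apply Rmult_lt_0_compat; lra. }
  specialize (H (mkposreal _ He)).
  revert H. apply filter_imp. intros ab [z [Hz Hb]].
  exists (Cmult c z). split.
  - apply RInt_Cmult; exact Hz.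
  - refine (norm_compat1 (K := R_AbsRing) (V := C_R_NormedModule) _ _ _ _).
    rewrite normC.
    change (Cmod (Cminus (Cmult c z) (Cmult c l)) < eps).
    replace (Cminus (Cmult c z) (Cmult c l)) with (Cmult c (Cminus z l)) by ring.
    rewrite Cmod_mult.
    assert (Hz2 := norm_compat2 (K := R_AbsRing) (V := C_R_NormedModule) _ _ _ Hb).
    rewrite normC in Hz2. simpl in Hz2. change (Cmod (Cminus z l) < @norm_factor R_AbsRing C_R_NormedModule *
                   (eps / ((1 + Cmod c) * @norm_factor R_AbsRing C_R_NormedModule))) in Hz2.
    replace (@norm_factor R_AbsRing C_R_NormedModule *
               (eps / ((1 + Cmod c) * @norm_factor R_AbsRing C_R_NormedModule)))
      with (eps / (1 + Cmod c)) in Hz2 by (field; lra).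
    assert (Hep := cond_pos eps).
    apply Rle_lt_trans with (Cmod c * (eps / (1 + Cmod c))).
    apply Rmult_le_compat_l; lra.
    apply Rmult_lt_reg_r with (1 + Cmod c). lra.
    field_simplify; lra.
Qed.

Lemma gen_zero :
  is_RInt_gen (V := C_R_NormedModule) (fun _ => RtoC 0) (at_right 0) (at_left 1) (RtoC 0).
Proof.
  unfold is_RInt_gen.
  apply (filterlimi_lim_ext (fun _ => RtoC 0)).
  - intros ab. 
    assert (H := is_RInt_const (V := C_R_NormedModule) (fst ab) (snd ab) (RtoC 0)).
    match type of H with is_RInt _ _ _ ?v => replace v with (RtoC 0) in H end. exact H.
    apply injective_projections; simpl; unfold scal; simpl; unfold mult; simpl; ring.
  - apply filterlim_const.
Qed.

Lemma gen_sumC (N : nat) (f : nat -> R -> C) (l : nat -> C) :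
  (forall j, (j < N)%nat -> is_RInt_gen (V := C_R_NormedModule) (f j) (at_right 0) (at_left 1) (l j)) ->
  is_RInt_gen (V := C_R_NormedModule) (fun x => sumC (fun j => f j x) N) (at_right 0) (at_left 1) (sumC l N).
Proof.
  induction N as [|N IH]; intros H; simpl.
  - exact gen_zero.
  - apply (is_RInt_gen_plus (V := C_R_NormedModule) (fun x => sumC (fun j => f j x) N) (f N)).
    apply IH. intros j Hj; apply H; lia.
    apply H; lia.
Qed.

Lemma sumC_ext (f g : nat -> C) N : (forall j, (j < N)%nat -> f j = g j) -> sumC f N = sumC g N.
Proof.
  induction N as [|N IH]; intros H; simpl. reflexivity.
  rewrite IH, H. reflexivity. lia. intros; apply H; lia.
Qed.

Lemma gen_pos (h : R -> C) l :
  (forall x, Im (h x) = 0 /\ 0 <= Re (h x)) ->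
  is_RInt_gen (V := C_R_NormedModule) h (at_right 0) (at_left 1) l ->
  Im l = 0 /\ 0 <= Re l.
Proof.
  intros Hh H. unfold is_RInt_gen in H.
  assert (H' := proj1 (filterlimi_locally (U := C_R_NormedModule) (F := filter_prod (at_right 0) (at_left 1)) (fun ab => is_RInt (V := C_R_NormedModule) h (fst ab) (snd ab)) l) H).
  assert (Key : forall eps : posreal, Rabs (Im l) < eps /\ - eps < Re l).
  { intros eps.
    assert (HF : filter_prod (at_right 0) (at_left 1) (fun ab => fst ab < snd ab)).
    { apply Filter_prod with (fun x => 0 < x < /2) (fun y => 1 - /2 < y < 1).
      apply ev_right; lra. apply ev_left; lra. intros x y Hx Hy; simpl; lra. }
    destruct (filter_ex (F := filter_prod (at_right 0) (at_left 1)) _ (filter_and _ _ HF (H' eps)))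
      as [[a b] [Hab [z [Hz Hb]]]].
    simpl in Hab, Hz.
    assert (H1 := is_RInt_fct_extend_fst (U := R_NormedModule) (V := R_NormedModule) h a b z Hz).
    assert (H2 := is_RInt_fct_extend_snd (U := R_NormedModule) (V := R_NormedModule) h a b z Hz).
    assert (Hz1 : 0 <= fst z).
    { apply (is_RInt_ge_0 _ a b _ (Rlt_le _ _ Hab) H1). intros x _. apply Hh. }
    assert (Hz2 : snd z = 0).
    { apply (is_RInt_unique (V := R_CompleteNormedModule)) in H2.
      assert (E : RInt (fun t => snd (h t)) a b = 0).
      { rewrite (RInt_ext _ (fun _ => 0)).
        rewrite RInt_const. unfold scal; simpl; unfold mult; simpl; ring.
        intros x _. apply Hh. }
      transitivity (RInt (fun t => snd (h t)) a b). symmetry; exact H2. exact E. }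
    destruct Hb as [Hb1 Hb2].
    change (Rabs (fst z - fst l) < eps) in Hb1.
    change (Rabs (snd z - snd l) < eps) in Hb2.
    rewrite Hz2 in Hb2. apply Rabs_def2 in Hb1. apply Rabs_def2 in Hb2.
    unfold Re, Im. split.
    - apply Rabs_def1; lra.
    - lra. }
  split.
  - destruct (Req_dec (Im l) 0) as [E|E]; auto.
    exfalso. assert (Hp : 0 < Rabs (Im l)) by (apply Rabs_pos_lt; auto).
    destruct (Key (mkposreal _ Hp)) as [K _]. simpl in K. lra.
  - destruct (Rle_lt_dec 0 (Re l)) as [E|E]; auto.
    exfalso. assert (Hp : 0 < - Re l) by lra.
    destruct (Key (mkposreal _ Hp)) as [_ K]. simpl in K. lra.
Qed.

Lemma psd_step n (A : nat -> nat -> C) (g : nat -> R -> C) (L : nat -> nat -> C) :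
  psd n A ->
  (forall j k, (j < n)%nat -> (k < n)%nat ->
     is_RInt_gen (V := C_R_NormedModule) (fun x => Cmult (g j x) (Cconj (g k x)))
       (at_right 0) (at_left 1) (L j k)) ->
  psd n (fun j k => Cmult (A j k) (L j k)).
Proof.
  intros HA HL z. cbv zeta.
  set (h := fun x => sumC (fun j => sumC (fun k =>
              Cmult (Cmult (Cmult (A j k) (z j)) (Cconj (z k))) (Cmult (g j x) (Cconj (g k x)))) n) n).
  assert (Hint : is_RInt_gen (V := C_R_NormedModule) h (at_right 0) (at_left 1)
     (sumC (fun j => sumC (fun k => Cmult (Cmult (Cmult (A j k) (z j)) (Cconj (z k))) (L j k)) n) n)).
  { apply (gen_sumC n (fun j x => sumC (fun k =>
              Cmult (Cmult (Cmult (A j k) (z j)) (Cconj (z k))) (Cmult (g j x) (Cconj (g k x)))) n)).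
    intros j Hj.
    apply (gen_sumC n (fun k x =>
              Cmult (Cmult (Cmult (A j k) (z j)) (Cconj (z k))) (Cmult (g j x) (Cconj (g k x))))).
    intros k Hk. apply gen_Cmult. apply HL; auto. }
  apply gen_pos in Hint.
  - replace (sumC (fun j => sumC (fun k => Cmult (Cmult (Cmult (A j k) (L j k)) (z j)) (Cconj (z k))) n) n)
      with (sumC (fun j => sumC (fun k => Cmult (Cmult (Cmult (A j k) (z j)) (Cconj (z k))) (L j k)) n) n).
    exact Hint.
    apply sumC_ext; intros j Hj. apply sumC_ext; intros k Hk. ring.
  - intros x. specialize (HA (fun j => Cmult (z j) (g j x))). cbv zeta in HA.
    replace (h x) with (sumC (fun j => sumC (fun k =>
       Cmult (Cmult (A j k) (Cmult (z j) (g j x))) (Cconj (Cmult (z k) (g k x)))) n) n).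
    exact HA.
    unfold h. apply sumC_ext; intros j Hj. apply sumC_ext; intros k Hk.
    rewrite Cmult_conj. ring.
Qed.

Lemma sumC_scal c f N : sumC (fun k => Cmult c (f k)) N = Cmult c (sumC f N).
Proof. induction N; simpl. apply injective_projections; simpl; ring. rewrite IHN. ring. Qed.

Lemma sumC_conj f N : Cconj (sumC f N) = sumC (fun k => Cconj (f k)) N.
Proof. induction N; simpl. apply injective_projections; simpl; ring. rewrite Cplus_conj, IHN. reflexivity. Qed.

Lemma psd_one n : psd n (fun _ _ => RtoC 1).
Proof.
  intros z. cbv zeta.
  set (S := sumC z n).
  replace (sumC (fun j => sumC (fun k => Cmult (Cmult (RtoC 1) (z j)) (Cconj (z k))) n) n)
    with (Cmult S (Cconj S)).
  - unfold S. destruct (sumC z n) as [x y]. unfold Re, Im; simpl. split; [ring | nra].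
  - unfold S. rewrite sumC_conj.
    rewrite Cmult_comm, <- sumC_scal.
    apply sumC_ext; intros j Hj.
    rewrite Cmult_comm, <- sumC_scal.
    apply sumC_ext; intros k Hk. ring.
Qed.

Definition gfun (p q : C) (x : R) : C :=
  Cmult (cpow x (Cminus p (RtoC (/2)))) (cpow (1 - x) (Cminus q (RtoC (/2)))).

Lemma split_exp (pj pk : C) :
  Cminus (Cplus pj (Cconj pk)) 1 = Cplus (Cminus pj (RtoC (/2))) (Cconj (Cminus pk (RtoC (/2)))).
Proof. apply injective_projections; simpl; field. Qed.

Lemma beta_gen (pj pk qj qk : C) :
  0 < Re pj -> 0 < Re pk -> 0 < Re qj -> 0 < Re qk ->
  is_RInt_gen (V := C_R_NormedModule)
    (fun x => Cmult (gfun pj qj x) (Cconj (gfun pk qk x))) (at_right 0) (at_left 1)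
    (Beta (Cplus pj (Cconj pk)) (Cplus qj (Cconj qk))).
Proof.
  intros H1 H2 H3 H4.
  destruct (Fi_exists (Cplus pj (Cconj pk)) (Cplus qj (Cconj qk))) as [l Hl].
  unfold Re in *; simpl; lra. unfold Re in *; simpl; lra.
  assert (E : Beta (Cplus pj (Cconj pk)) (Cplus qj (Cconj qk)) = l).
  { unfold Beta.
    apply (is_RInt_gen_unique (V := C_R_CompleteNormedModule)
             (Fa := at_right 0) (Fb := at_left 1)).
    exact Hl. }
  rewrite E.
  apply (is_RInt_gen_ext (V := C_R_NormedModule) (Fi (Cminus (Cplus pj (Cconj pk)) 1) (Cminus (Cplus qj (Cconj qk)) 1))).
  - apply filter_forall. intros ab x _.
    unfold Fi, gfun. rewrite !split_exp, !cpow_plus, <- !cpow_conj, !Cmult_conj. match goal with |- ?a = ?b => change (@eq C a b) end; ring.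
  - exact Hl.
Qed.

Theorem mainTheorem6 (m n : nat) (p q : nat -> nat -> C) :
  (forall j l, (j < n)%nat -> (l < m)%nat -> 0 < Re (p j l) /\ 0 < Re (q j l)) ->
  psd n (fun j k =>
    prodC (fun l => Beta (Cplus (p j l) (Cconj (p k l)))
                         (Cplus (q j l) (Cconj (q k l)))) m).
Proof.
  induction m as [|m IH]; intros H.
  - simpl. apply psd_one.
  - simpl.
    apply (psd_step n _ (fun j x => gfun (p j m) (q j m) x)).
    + apply IH. intros j l Hj Hl. apply H; lia.
    + intros j k Hj Hk.
      destruct (H j m Hj ltac:(lia)). destruct (H k m Hk ltac:(lia)).
      apply beta_gen; assumption.
Qed.
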